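(* Let $k\ge 1$ and $s>2^{k-1}(2^k+1)$ be integers. Let $H$ be any graph obtained from the vertex-disjoint union of $s$ cliques $K(0),K(1),\dots,K(s-1)$, each on $2k+1$ vertices, by adding, for each $0\le i\le s-1$, a matching $M_i$ of $k$ edges between $K(i)$ and $K(i+1)$, where $K(s)=K(0)$. Then the edge connectivity of $H$ is $2k$ and $m(H)=2^k$.
   Context: All graphs are finite and simple. The edge connectivity is the minimum number of edges whose removal disconnects the graph. For graphs $G_1=(V,E_1)$, $G_2=(V,E_2)$, their symmetric difference is $(V,E_1\oplus E_2)$, where $E_1\oplus E_2$ is the set of edges in exactly one of $E_1,E_2$. A connectivity code for $H=(V,E)$ is a collection of distinct spanning subgraphs $(V,E')$, $E'\subseteq E$, such that the symmetric difference of any two distinct members is a connected graph on $V$; $m(H)$ is the maximum cardinality of a connectivity code for $H$. *)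

(* Defs.v *)
From mathcomp Require Import all_boot.
Set Implicit Arguments. Unset Strict Implicit. Unset Printing Implicit Defensive.

(* A finite simple graph on a finType V is given by its edge set
   E : {set {set V}}, each edge being a 2-element subset of V. *)

Section Graphs.
Variable V : finType.

Definition adj_of (F : {set {set V}}) : rel V := fun x y => [set x; y] \in F.

Definition connectedb (F : {set {set V}}) : bool :=
  [forall x, forall y, connect (adj_of F) x y].

(* edge connectivity: minimum number of edges whose removal disconnects
   the graph (default #|E| if no such set exists, irrelevant here) *)
Definition edge_connectivity (E : {set {set V}}) : nat :=
  \big[minn/#|E|]_(F in powerset E | ~~ connectedb (E :\: F)) #|F|.

Definition symdiff (A B : {set {set V}}) : {set {set V}} := (A :\: B) :|: (B :\: A).

(* a connectivity code for (V,E): a collection of (distinct) spanning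
   subgraphs (identified with their edge sets F \subset E) such that the
   symmetric difference of any two distinct members is connected *)
Definition is_conn_code (E : {set {set V}}) (C : {set {set {set V}}}) : bool :=
  [forall F in C, F \subset E] &&
  [forall F1 in C, forall F2 in C, (F1 != F2) ==> connectedb (symdiff F1 F2)].

Definition m_code (E : {set {set V}}) : nat :=
  \max_(C : {set {set {set V}}} | is_conn_code E C) #|C|.

End Graphs.

(* The vertex type of H: clique index i < s and position a < 2k+1. *)
Definition HV (s k : nat) : finType := ('I_s * 'I_(2 * k + 1))%type.

Definition clique_edges (s k : nat) : {set {set HV s k}} :=
  [set e | [exists i : 'I_s, exists a : 'I_(2 * k + 1), exists b : 'I_(2 * k + 1),
     (a != b) && (e == [set ((i, a) : HV s k); (i, b)])]].

Definition is_matching_between (s k : nat) (i : 'I_s) (M : {set {set HV s k}}) : Prop :=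
  [/\ #|M| = k,
      (forall e, e \in M -> exists a b : 'I_(2 * k + 1),
          e = [set ((i, a) : HV s k); (ordS i, b)])
    & (forall e f, e \in M -> f \in M -> e != f -> [disjoint e & f])].

Definition H_edges (s k : nat) (M : 'I_s -> {set {set HV s k}}) : {set {set HV s k}} :=
  clique_edges s k :|: \bigcup_(i : 'I_s) M i.

(* Main.v *)
Require Import Defs.
From mathcomp Require Import all_boot zify.
Set Implicit Arguments. Unset Strict Implicit. Unset Printing Implicit Defensive.

Lemma adj_sym (V : finType) (F : {set {set V}}) : symmetric (adj_of F).
Proof. by move=> x y; rewrite /adj_of setUC. Qed.

Lemma conn_sym (V : finType) (F : {set {set V}}) x y :
  connect (adj_of F) x y = connect (adj_of F) y x.
Proof. exact: (sym_connect_sym (@adj_sym V F)). Qed.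

Lemma conn_mono (V : finType) (F G : {set {set V}}) x y :
  F \subset G -> connect (adj_of F) x y -> connect (adj_of G) x y.
Proof.
move=> sFG; apply: connect_sub => u v huv; apply: connect1.
by rewrite /adj_of (subsetP sFG).
Qed.

Lemma connectedb_mono (V : finType) (F G : {set {set V}}) :
  F \subset G -> connectedb F -> connectedb G.
Proof.
move=> sFG /forallP cF; apply/forallP => x; apply/forallP => y.
by apply: (conn_mono sFG); move/forallP: (cF x); apply.
Qed.

Lemma connectedb_root (V : finType) (F : {set {set V}}) r :
  (forall x, connect (adj_of F) x r) -> connectedb F.
Proof.
move=> h; apply/forallP => x; apply/forallP => y.
by apply: connect_trans (h x) _; rewrite conn_sym.
Qed.

Lemma set2_eqP (V : finType) (x y x' y' : V) :
  [set x; y] = [set x'; y'] -> (x = x' /\ y = y') \/ (x = y' /\ y = x').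
Proof.
move=> eq.
have hx : x \in [set x'; y'] by rewrite -eq set21.
have hy : y \in [set x'; y'] by rewrite -eq set22.
have hx' : x' \in [set x; y] by rewrite eq set21.
have hy' : y' \in [set x; y] by rewrite eq set22.
case/set2P: hx => ex; case/set2P: hy => ey; subst; auto;
  case/set2P: hx' => ex; case/set2P: hy' => ey; subst; auto.
Qed.

Lemma cut_closed (V : finType) (F : {set {set V}}) (S : {pred V}) x y :
  (forall u v, [set u; v] \in F -> u \in S -> v \in S) ->
  connect (adj_of F) x y -> x \in S -> y \in S.
Proof.
move=> h c xS.
have cl : closed (adj_of F) S.
  move=> u v huv; apply/idP/idP; first by apply: h.
  by apply: h; rewrite /adj_of setUC.
by rewrite -(closed_connect cl c).
Qed.

Section G.
Variables (k s : nat) (M : 'I_s -> {set {set HV s k}}).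
Hypothesis hs : 3 <= s.
Hypothesis hM : forall i : 'I_s, is_matching_between i (M i).
Local Notation V := (HV s k).
Local Notation E := (H_edges M).

Lemma ordS_val (i : 'I_s) : (ordS i : nat) = if i.+1 == s then 0 else i.+1.
Proof.
rewrite /= ; case: eqP => [->|ne]; first by rewrite modnn.
by rewrite modn_small //; have := ltn_ord i; lia.
Qed.

Lemma ordS_neq (i : 'I_s) : ordS i != i.
Proof.
apply/eqP => /(congr1 (@nat_of_ord _)); rewrite ordS_val; case: eqP => h /=; lia.
Qed.

Lemma ordSS_neq (i : 'I_s) : ordS (ordS i) != i.
Proof.
apply/eqP => /(congr1 (@nat_of_ord _)).
have h1 := ordS_val i; have h2 := ordS_val (ordS i); have := ltn_ord i.
move: h1 h2; case: ifP => /eqP a1 h1; case: ifP => /eqP a2 h2; lia.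
Qed.

Lemma match_form (i : 'I_s) e : e \in M i -> exists a b : 'I_(2 * k + 1),
  e = [set ((i, a) : V); (ordS i, b)].
Proof. by case: (hM i) => _ h _; apply: h. Qed.

Lemma match_disj (i j : 'I_s) e : i != j -> e \in M i -> e \in M j -> False.
Proof.
move=> ne /match_form [a [b ->]] /match_form [c [d]] /set2_eqP.
case=> [[e1 e2]|[e1 e2]].
  by move/negP: ne; apply; move/(congr1 fst): e1 => /= ->.
move/(congr1 fst): e1 => /= e1; move/(congr1 fst): e2 => /= e2.
by move: (ordSS_neq j); rewrite -e1 e2 eqxx.
Qed.

Lemma match_disjI (i j : 'I_s) : i != j -> M i :&: M j = set0.
Proof.
move=> ne; apply/setP => e; rewrite !inE; apply/negP => /andP [h1 h2].
exact: (match_disj ne h1 h2).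
Qed.

Lemma card_match2 (i j : 'I_s) : i != j -> #|M i :|: M j| = 2 * k.
Proof.
move=> ne; rewrite cardsU match_disjI // cards0.
by case: (hM i) => -> _ _; case: (hM j) => -> _ _; lia.
Qed.

Lemma edgeE e : e \in E ->
  (exists (c : 'I_s) (a b : 'I_(2 * k + 1)), a != b /\ e = [set ((c, a) : V); (c, b)])
  \/ (exists i, e \in M i).
Proof.
case/setUP.
  rewrite inE => /existsP [c /existsP [a /existsP [b /andP [ab /eqP ->]]]].
  by left; exists c, a, b.
by case/bigcupP => i _ h; right; exists i.
Qed.

Lemma cut_edge (i j : 'I_s) (x y : V) : i < j ->
  [set x; y] \in E -> i < x.1 <= j -> ~~ (i < y.1 <= j) ->
  [set x; y] \in M i :|: M j.
Proof.
move=> ij /[dup] he /edgeE [[c [a [b [ab eq]]]]|[i' hi']] hx hy.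
  move/set2_eqP: eq => [[e1 e2]|[e1 e2]]; subst; by rewrite hx in hy.
move: (hi') => /match_form [a [b eq]].
have ni : i' != i -> (i' : nat) <> i by move=> /eqP h h'; apply: h; apply: val_inj.
have nj : i' != j -> (i' : nat) <> j by move=> /eqP h h'; apply: h; apply: val_inj.
case: (altP (i' =P i)) => [<-|ni2]; first by rewrite inE hi'.
case: (altP (i' =P j)) => [<-|nj2]; first by rewrite inE hi' orbT.
move: (ni ni2) (nj nj2) => ni3 nj3.
have := ltn_ord i'; have := ltn_ord j; have := (ordS_val i' : i'.+1 %% s = _).
move/set2_eqP: eq => [[e1 e2]|[e1 e2]]; subst; rewrite /= in hx hy;
  case: ifP => /eqP h1 h2 h3 h4; rewrite ?h2 in hy; exfalso; lia.
Qed.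


Lemma code_sep C F G (i j : 'I_s) : is_conn_code E C -> F \in C -> G \in C ->
  F != G -> i != j -> F :&: M i = G :&: M i -> F :&: M j = G :&: M j -> False.
Proof.
move=> hC; wlog ij : i j / i < j.
  move=> hw FC GC FG ne ei ej; case: (ltngtP i j) => h.
  - exact: (hw i j h FC GC FG ne ei ej).
  - by apply: (hw j i h FC GC FG _ ej ei); rewrite eq_sym.
  - by move/eqP: ne; apply; apply: val_inj.
move=> FC GC FG _ ei ej.
case/andP: hC => /forall_inP sub /forall_inP hc.
have /forall_inP/(_ _ GC) := hc F FC; rewrite FG /= => /forallP cc.
have p0 : 'I_(2 * k + 1) by exists 0; rewrite addn1.
have := cc ((j, p0) : V) => /forallP/(_ ((i, p0) : V)) cn.
suff key : forall u v : V, [set u; v] \in symdiff F G -> i < u.1 <= j -> i < v.1 <= j.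
  have := @cut_closed _ (symdiff F G) [pred v : V | i < v.1 <= j] _ _ _ cn.
  rewrite !inE /= ij leqnn ltnn /= => h; suff : false by []; apply: h => // u v; exact: key.
move=> u v huv hu; apply: contraT => hv.
have hE : [set u; v] \in E.
  move: huv; rewrite /symdiff => /setUP [] /setDP [h _].
    exact: (subsetP (sub F FC)).
  exact: (subsetP (sub G GC)).
have := cut_edge ij hE hu hv; rewrite inE => /orP [] hm.
  move/setP: ei => /(_ [set u; v]); rewrite !inE hm !andbT.
  by move: huv; rewrite /symdiff !inE => /orP [] /andP [] /negbTE -> ->.
move/setP: ej => /(_ [set u; v]); rewrite !inE hm !andbT.
by move: huv; rewrite /symdiff !inE => /orP [] /andP [] /negbTE -> ->.
Qed.

Lemma code_le C : 1 <= k -> 2 ^ k.-1 * (2 ^ k + 1) < s ->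
  is_conn_code E C -> #|C| <= 2 ^ k.
Proof.
move=> hk hsk hC; rewrite leqNgt; apply/negP => hlt.
pose D := [set A : {set {set {set V}}} | A \subset C & #|A| == (2 ^ k).+1].
have : 0 < #|D| by rewrite cards_draws bin_gt0.
case/card_gt0P => C'; rewrite inE => /andP [sC' /eqP cC'].
pose P := [set X : {set {set {set V}}} | X \subset C' & #|X| == 2].
pose agree (i : 'I_s) (X : {set {set {set V}}}) :=
  [forall F in X, forall G in X, F :&: M i == G :&: M i].
have ex : forall i, exists X, (X \in P) && agree i X.
  move=> i; pose f := fun F : {set {set V}} => F :&: M i.
  have : ~~ dinjectiveb f C'.
    apply/negP => /dinjectiveP inj.
    have := card_in_imset inj; rewrite cC' => ci.
    have : f @: C' \subset powerset (M i).
      by apply/subsetP => x /imsetP [F _ ->]; rewrite inE subsetIr.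
    move/subset_leq_card; rewrite ci card_powerset.
    by case: (hM i) => -> _ _; rewrite ltnn.
  case/dinjectivePn => F FC [G]; rewrite !inE => /andP [GF GC] fe.
  exists [set F; G]; apply/andP; split.
    rewrite /P inE cards2 (eq_sym F) GF andbT; apply/subsetP => x /set2P [] -> //.
  apply/forall_inP => x /set2P [] ->; apply/forall_inP => y /set2P [] -> //;
    by rewrite /f in fe; rewrite fe.
pose g (i : 'I_s) := odflt set0 [pick X in P | agree i X].
have gP : forall i, (g i \in P) && agree i (g i).
  move=> i; rewrite /g; case: pickP => [X /andP [h1 h2]|none] /=.
    by rewrite h1 h2.
  by case: (ex i) => X /andP [h1 h2]; move: (none X); rewrite h1 h2.
have ginj : injective g.
  move=> i j eqg; apply/eqP; apply/negPn/negP => ne.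
  have /andP [gPi ai] := gP i; have /andP [_ aj] := gP j.
  move: gPi; rewrite inE => /andP [sub /cards2P [F [G [FG eX]]]].
  have FX : F \in g i by rewrite eX set21.
  have GX : G \in g i by rewrite eX set22.
  have FC : F \in C by apply: (subsetP sC'); apply: (subsetP sub).
  have GC : G \in C by apply: (subsetP sC'); apply: (subsetP sub).
  move/forall_inP/(_ _ FX)/forall_inP/(_ _ GX)/eqP: ai => ei.
  rewrite eqg in GX FX.
  move/forall_inP/(_ _ FX)/forall_inP/(_ _ GX)/eqP: aj => ej.
  exact: (code_sep hC FC GC FG ne ei ej).
have : #|g @: [set: 'I_s]| <= #|P|.
  by apply: subset_leq_card; apply/subsetP => x /imsetP [i _ ->]; case/andP: (gP i).
rewrite card_imset // cardsT card_ord /P cards_draws cC' bin2 /=.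
case: k hk hsk => // k' _; rewrite expnS.
have -> : (2 * 2 ^ k').+1 * (2 * 2 ^ k') = 2 * ((2 * 2 ^ k').+1 * 2 ^ k') by rewrite mulnCA.
by rewrite (mul2n ((2 * 2 ^ k').+1 * 2 ^ k')) doubleK /=; lia.
Qed.


Lemma clique_edge (c : 'I_s) (a b : 'I_(2 * k + 1)) : a != b ->
  [set ((c, a) : V); (c, b)] \in E.
Proof.
move=> ab; apply/setUP; left; rewrite inE; apply/existsP; exists c.
by apply/existsP; exists a; apply/existsP; exists b; rewrite ab eqxx.
Qed.

Lemma match_edge (i : 'I_s) e : e \in M i -> e \in E.
Proof. by move=> h; apply/setUP; right; apply/bigcupP; exists i. Qed.

Lemma pairE2 (c c' : 'I_s) (z z' : 'I_(2 * k + 1)) :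
  ((c, z) : V) = (c', z') -> z = z'.
Proof. by move/(congr1 snd). Qed.

Lemma clique_conn (F : {set {set V}}) (c : 'I_s) (a b : 'I_(2 * k + 1)) : F \subset E -> #|F| < 2 * k ->
  connect (adj_of (E :\: F)) (c, a) (c, b).
Proof.
move=> sF cF; case: (a =P b) => [->|ab]; first exact: connect0.
apply: contraT => /negP nc.
pose x : V := (c, a); pose y : V := (c, b).
pose g z := if z == b then [set x; y]
            else if [set x; (c, z)] \in F then [set x; ((c, z) : V)] else [set ((c, z) : V); y].
have gF : forall z, z != a -> g z \in F.
  move=> z za; rewrite /g; case: ifP => [_|/negbT zb].
    apply: contraT => h; exfalso; apply: nc; apply: connect1.
    by rewrite /adj_of inE h clique_edge //; apply/eqP.
  case: ifP => // h1; apply: contraT => h2; exfalso; apply: nc.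
  apply: (@connect_trans _ _ ((c, z) : V)); apply: connect1.
    by rewrite /adj_of inE h1 clique_edge // eq_sym.
  by rewrite /adj_of inE (negbTE h2) clique_edge //; apply/eqP.
have mem : forall z z', z != a -> z != b -> ((c, z) : V) \in g z' -> z = z'.
  move=> z z' za zb; rewrite /g; case: (z' =P b) => [_|zb'].
    by case/set2P => /pairE2 h; [move/eqP: za | move/eqP: zb].
  by case: ifP => _ /set2P [] /pairE2 h //; [move/eqP: za | move/eqP: zb].
have gz : forall z, z != b -> ((c, z) : V) \in g z.
  by move=> z zb; rewrite /g (negbTE zb); case: ifP; rewrite ?set21 ?set22.
have inj : {in [set~ a] &, injective g}.
  move=> z1 z2; rewrite !inE => h1 h2 e.
  case: (z1 =P b) => [e1|n1].
    case: (z2 =P b) => [e2|n2]; first by rewrite e1 e2.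
    by apply: esym; apply: mem => //; [apply/eqP | rewrite e gz //; apply/eqP].
  by apply: mem => //; [apply/eqP | rewrite -e gz //; apply/eqP].
have : g @: [set~ a] \subset F.
  by apply/subsetP => w /imsetP [z]; rewrite !inE => za ->; apply: gF.
move/subset_leq_card; rewrite card_in_imset // cardsC1 card_ord addn1 /=.
by rewrite leqNgt cF.
Qed.

Lemma conn_rem (F : {set {set V}}) : F \subset E -> #|F| < 2 * k -> connectedb (E :\: F).
Proof.
move=> sF cF.
have p0 : 'I_(2 * k + 1) by exists 0; rewrite addn1.
have cl := fun c a b => @clique_conn F c a b sF cF.
pose alive (i : 'I_s) := [exists e in M i, e \notin F].
have link : forall i, alive i -> connect (adj_of (E :\: F)) (i, p0) (ordS i, p0).
  move=> i /exists_inP [e em enF].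
  move: (em) => /match_form [a [b ee]]; subst e.
  apply: connect_trans (cl i p0 a) _; apply: connect_trans _ (cl (ordS i) b p0).
  by apply: connect1; rewrite /adj_of inE enF (match_edge em).
have dead : forall i j, ~~ alive i -> ~~ alive j -> i = j.
  move=> i j hi hj; apply/eqP; apply: contraT => ne.
  have : M i :|: M j \subset F.
    apply/subsetP => e /setUP [] h.
      by apply: contraT => enF; rewrite -(negbTE hi); apply/exists_inP; exists e.
    by apply: contraT => enF; rewrite -(negbTE hj); apply/exists_inP; exists e.
  by move/subset_leq_card; rewrite card_match2 // leqNgt cF.
have chain : forall (a b : 'I_s), a <= b -> (forall i : 'I_s, a <= i < b -> alive i) ->
    connect (adj_of (E :\: F)) (a, p0) (b, p0).
  move=> a b ab hal.
  suff : forall n (b' : 'I_s), (b' : nat) = a + n -> b' <= b ->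
      connect (adj_of (E :\: F)) (a, p0) (b', p0).
    by move/(_ (b - a) b); apply => //; lia.
  elim=> [|n IH] b' eb' lb.
    by have -> : b' = a by apply: val_inj; rewrite /= eb' addn0.
  have lt : a + n < s by have := ltn_ord b'; lia.
  pose b'' : 'I_s := Ordinal lt.
  apply: connect_trans (IH b'' erefl _) _; first by rewrite /=; lia.
  have -> : b' = ordS b''.
    apply: ord_inj; rewrite ordS_val /=; case: eqP => h; last by lia.
    by have := ltn_ord b'; lia.
  apply: link; apply: hal; rewrite /=; lia.
have s0 : 0 < s by lia.
pose z0 : 'I_s := Ordinal s0.
apply: (@connectedb_root _ _ ((z0, p0) : V)) => -[c q].
apply: connect_trans (cl c q p0) _.
rewrite conn_sym.
case: (pickP (fun i => ~~ alive i)) => [d hd | none].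
  have alv : forall i, i != d -> alive i.
    by move=> i ne; apply: contraT => h; move: ne; rewrite (dead _ _ h hd) eqxx.
  have ne_val : forall i : 'I_s, (i : nat) <> d -> i != d.
    by move=> i h; apply/eqP => e; apply: h; rewrite e.
  case: (leqP c d) => cd.
    by apply: chain => // i /andP [_ ic]; apply: alv; apply: ne_val; lia.
  have ls : s.-1 < s by lia.
  pose l : 'I_s := Ordinal ls.
  have -> : z0 = ordS l.
    by apply: ord_inj; rewrite ordS_val /=; case: eqP => // h; lia.
  rewrite conn_sym; apply: connect_trans (chain c l _ _) (link l _).
  - by rewrite /=; have := ltn_ord c; lia.
  - by move=> i /andP [ci _]; apply: alv; apply: ne_val; lia.
  - by apply: alv; apply: ne_val; rewrite /=; have := ltn_ord c; lia.
apply: chain => // i _; move: (none i) => /= /negbFE //.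
Qed.

End G.
Definition idx (p : nat) := (p - 1) %/ 2.
Definition side (p : nat) := (p - 1) %% 2.
Definition owner (x y : nat) : nat :=
  if x == 0 then idx y else if y == 0 then idx x else if idx x == idx y then idx x
  else if side x == side y then minn (idx x) (idx y) else maxn (idx x) (idx y).

Lemma owner_sym x y : owner x y = owner y x.
Proof.
rewrite /owner /idx /side; repeat case: ifP => /eqP ?; lia.
Qed.

Lemma owner_ab j : owner (2 * j + 2) (2 * j + 1) = j.
Proof. rewrite /owner /idx /side; repeat case: ifP => /eqP ?; lia. Qed.

Lemma owner_reach j x : x <> 2 * j + 1 ->
  owner (2 * j + 1) x = j \/ (x <> 2 * j + 2 /\ owner (2 * j + 2) x = j).
Proof. move=> h; rewrite /owner /idx /side; repeat case: ifP => /eqP ?; lia. Qed.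

Lemma bigmin_le_seq (I : eqType) (P : pred I) (f : I -> nat) x i0 (r : seq I) :
  i0 \in r -> P i0 -> \big[minn/x]_(i <- r | P i) f i <= f i0.
Proof.
elim: r => // a r IH; rewrite inE big_cons => /orP [/eqP <- | h] Pi.
  by rewrite Pi geq_minl.
case: ifP => _; last exact: IH.
exact: leq_trans (geq_minr _ _) (IH h Pi).
Qed.

Lemma bigmin_le (I : finType) (P : pred I) (f : I -> nat) x i0 :
  P i0 -> \big[minn/x]_(i | P i) f i <= f i0.
Proof. by apply: bigmin_le_seq; rewrite mem_index_enum. Qed.

Section C.
Variables (k s : nat) (M : 'I_s -> {set {set HV s k}}).
Hypothesis hs : 3 <= s.
Hypothesis hM : forall i : 'I_s, is_matching_between i (M i).
Local Notation V := (HV s k).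
Local Notation E := (H_edges M).

Definition cpiece (j : nat) : {set {set V}} :=
  [set e | [exists c : 'I_s, exists a : 'I_(2 * k + 1), exists b : 'I_(2 * k + 1),
     (a != b) && (owner a b == j) && (e == [set ((c, a) : V); (c, b)])]].
Definition me (i : 'I_s) (j : nat) : {set V} := nth set0 (enum (M i)) j.
Definition piece (j : nat) : {set {set V}} := cpiece j :|: [set me i j | i in 'I_s].
Definition FT (T : {set 'I_k}) : {set {set V}} := \bigcup_(j in T) piece j.

Lemma me_in i j : j < k -> me i j \in M i.
Proof.
move=> jk; rewrite /me -mem_enum; apply: mem_nth.
by rewrite -cardE; case: (hM i) => ->.
Qed.

Lemma piece_sub j : j < k -> piece j \subset E.
Proof.
move=> jk; apply/subsetP => e /setUP [].
  rewrite inE => /existsP [c /existsP [a /existsP [b /andP [/andP [ab _] /eqP ->]]]].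
  exact: clique_edge.
by case/imsetP => i _ ->; apply: (match_edge (me_in i jk)).
Qed.

Lemma piece_disj j l e : j < k -> l < k -> e \in piece j -> e \in piece l -> j = l.
Proof.
move=> jk lk /setUP [] hj /setUP [] hl.
- move: hj hl; rewrite !inE.
  move=> /existsP [c /existsP [a /existsP [b /andP [/andP [ab /eqP oj] /eqP ->]]]].
  move=> /existsP [c' /existsP [a' /existsP [b' /andP [/andP [ab' /eqP ol] /eqP]]]].
  case/set2_eqP => [[/pairE2 e1 /pairE2 e2]|[/pairE2 e1 /pairE2 e2]].
    by rewrite -oj -ol e1 e2.
  by rewrite -oj -ol e1 e2 owner_sym.
- move: hj; rewrite inE.
  move=> /existsP [c /existsP [a /existsP [b /andP [/andP [ab /eqP oj] /eqP ee]]]]; subst e.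
  case/imsetP: hl => i _ /esym eq; move: (me_in i lk); rewrite eq.
  case/(match_form hM) => a' [b'] /set2_eqP [[e1 e2]|[e1 e2]].
    move/(congr1 fst): e1 => /= e1; move/(congr1 fst): e2 => /= e2.
    by move: (ordS_neq hs i); rewrite -e2 -e1 eqxx.
  move/(congr1 fst): e1 => /= e1; move/(congr1 fst): e2 => /= e2.
  by move: (ordS_neq hs i); rewrite -e1 -e2 eqxx.
- move: hl; rewrite inE.
  move=> /existsP [c /existsP [a /existsP [b /andP [/andP [ab /eqP oj] /eqP ee]]]]; subst e.
  case/imsetP: hj => i _ /esym eq; move: (me_in i jk); rewrite eq.
  case/(match_form hM) => a' [b'] /set2_eqP [[e1 e2]|[e1 e2]].
    move/(congr1 fst): e1 => /= e1; move/(congr1 fst): e2 => /= e2.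
    by move: (ordS_neq hs i); rewrite -e2 -e1 eqxx.
  move/(congr1 fst): e1 => /= e1; move/(congr1 fst): e2 => /= e2.
  by move: (ordS_neq hs i); rewrite -e1 -e2 eqxx.
- case/imsetP: hj => i _ ee; subst e; case/imsetP: hl => i' _ eq.
  case: (i =P i') => [ii|ni].
    subst i'; move: eq; rewrite /me => /eqP.
    have sz : size (enum (M i)) = k by rewrite -cardE; case: (hM i).
    by rewrite nth_uniq ?enum_uniq ?sz // => /eqP.
  exfalso; apply: (match_disj hs hM (i := i) (j := i') (e := me i j)).
  + by apply/eqP.
  + exact: me_in.
  + by rewrite eq; apply: me_in.
Qed.


Lemma piece_conn j : j < k -> connectedb (piece j).
Proof.
move=> jk.
have haj : 2 * j + 1 < 2 * k + 1 by lia.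
have hbj : 2 * j + 2 < 2 * k + 1 by lia.
pose aj : 'I_(2 * k + 1) := Ordinal haj.
pose bj : 'I_(2 * k + 1) := Ordinal hbj.
have cedge : forall c (a b : 'I_(2 * k + 1)), a != b -> owner a b = j ->
    adj_of (piece j) ((c, a) : V) (c, b).
  move=> c a b ab oj; rewrite /adj_of; apply/setUP; left; rewrite inE.
  by apply/existsP; exists c; apply/existsP; exists a; apply/existsP; exists b;
     rewrite ab oj !eqxx.
have within : forall c x, connect (adj_of (piece j)) ((c, x) : V) (c, aj).
  move=> c x; case: (x =P aj) => [->|nx]; first exact: connect0.
  have nx' : (x : nat) <> 2 * j + 1 by move=> h; apply: nx; apply: ord_inj.
  case: (@owner_reach j x nx') => [h | [nb h]].
    apply: connect1; rewrite adj_sym; apply: cedge => //.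
    by apply/eqP => e; apply: nx.
  apply: (@connect_trans _ _ ((c, bj) : V)); apply: connect1.
    rewrite adj_sym; apply: cedge => //.
    by apply/eqP => e; apply: nb; rewrite -e.
  apply: cedge; last exact: owner_ab.
  by apply/eqP => /(congr1 (@nat_of_ord _)) /=; lia.
have s0 : 0 < s by lia.
pose z0 : 'I_s := Ordinal s0.
have chain : forall n (c : 'I_s), (c : nat) = n ->
    connect (adj_of (piece j)) ((c, aj) : V) (z0, aj).
  elim=> [|n IH] c ec.
    by have -> : c = z0 by apply: ord_inj; rewrite ec.
  have lt : n < s by have := ltn_ord c; lia.
  pose c' : 'I_s := Ordinal lt.
  have -> : c = ordS c'.
    apply: ord_inj; rewrite (ordS_val hs); case: ifP => /eqP h; have := ltn_ord c; rewrite /= in h *; lia.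
  apply: connect_trans _ (IH c' erefl).
  move: (me_in c' jk) => /(match_form hM) [a [b eab]].
  have hin : [set ((c', a) : V); (ordS c', b)] \in piece j.
    by rewrite -eab; apply/setUP; right; apply/imsetP; exists c'.
  apply: (@connect_trans _ _ ((ordS c', b) : V)).
    by rewrite conn_sym; apply: within.
  apply: (@connect_trans _ _ ((c', a) : V)); last exact: within.
  by apply: connect1; rewrite adj_sym.
apply: (@connectedb_root _ _ ((z0, aj) : V)) => -[c x].
exact: connect_trans (within c x) (chain _ c erefl).
Qed.


Lemma FT_sub (T : {set 'I_k}) : FT T \subset E.
Proof.
apply/subsetP => e /bigcupP [j _ h]; exact: (subsetP (piece_sub (ltn_ord j))).
Qed.

Lemma piece_diff (T U : {set 'I_k}) (j : 'I_k) : j \in T -> j \notin U -> piece j \subset FT T :\: FT U.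
Proof.
move=> jT jU; apply/subsetP => e h; rewrite inE; apply/andP; split.
  apply/negP => /bigcupP [l lU hl].
  have e' := piece_disj (ltn_ord j) (ltn_ord l) h hl.
  by move: jU; rewrite (ord_inj e') lU.
by apply/bigcupP; exists j.
Qed.

Lemma diff_elt (T U : {set 'I_k}) : T != U ->
  exists j, ((j \in T) && (j \notin U)) || ((j \in U) && (j \notin T)).
Proof.
move=> ne.
have : ~~ [forall j, (j \in T) == (j \in U)].
  by apply: contra ne => /forallP h; apply/eqP/setP => j; apply/eqP/h.
by case/forallPn => j h; exists j; move: h; case: (j \in T); case: (j \in U).
Qed.

Lemma FT_code (T U : {set 'I_k}) : T != U ->
  connectedb (symdiff (FT T) (FT U)) /\ FT T != FT U.
Proof.
move=> ne; case: (diff_elt ne) => j /orP [] /andP [h1 h2].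
  have sub := piece_diff h1 h2.
  have s0 : 0 < s by lia.
  have hm : me (Ordinal s0) j \in FT T :\: FT U.
    by apply: (subsetP sub); apply/setUP; right; apply/imsetP; exists (Ordinal s0).
  split.
    apply: (connectedb_mono _ (piece_conn (ltn_ord j))).
    by apply: subset_trans sub _; rewrite /symdiff subsetUl.
  by apply/eqP => e; move: hm; rewrite e setDv inE.
have sub := piece_diff h1 h2.
have s0 : 0 < s by lia.
have hm : me (Ordinal s0) j \in FT U :\: FT T.
  by apply: (subsetP sub); apply/setUP; right; apply/imsetP; exists (Ordinal s0).
split.
  apply: (connectedb_mono _ (piece_conn (ltn_ord j))).
  by apply: subset_trans sub _; rewrite /symdiff subsetUr.
by apply/eqP => e; move: hm; rewrite e setDv inE.
Qed.

Lemma m_code_ge : 2 ^ k <= m_code E.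
Proof.
pose Cd := [set FT T | T in powerset [set: 'I_k]].
have inj : injective FT.
  move=> T U e; apply/eqP; apply: contraT => ne.
  by case: (FT_code ne) => _; rewrite e eqxx.
have cC : #|Cd| = 2 ^ k by rewrite card_imset // card_powerset cardsT card_ord.
have code : is_conn_code E Cd.
  apply/andP; split.
    by apply/forall_inP => F /imsetP [T _ ->]; apply: FT_sub.
  apply/forall_inP => F /imsetP [T _ ->]; apply/forall_inP => G /imsetP [U _ ->].
  apply/implyP => ne; case: (FT_code (T := T) (U := U) _) => //.
  by apply: contra ne => /eqP ->.
by rewrite -cC; apply: (leq_bigmax_cond _ code).
Qed.

Lemma edge_conn_main : edge_connectivity E = 2 * k.
Proof.
have s0 : 0 < s by lia.
have s1 : 1 < s by lia.
pose i0 : 'I_s := Ordinal s0.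
pose i1 : 'I_s := Ordinal s1.
have ne01 : i0 != i1 by apply/eqP => /(congr1 (@nat_of_ord _)).
pose F0 := M i0 :|: M i1.
have cF0 : #|F0| = 2 * k by apply: card_match2.
have sF0 : F0 \subset E.
  by apply/subsetP => e /setUP [] h; apply: match_edge h.
have p0 : 'I_(2 * k + 1) by exists 0; rewrite addn1.
have nc : ~~ connectedb (E :\: F0).
  apply/negP => /forallP /(_ ((i1, p0) : V)) /forallP /(_ ((i0, p0) : V)) cn.
  have := @cut_closed _ (E :\: F0) [pred v : V | i0 < v.1 <= i1] _ _ _ cn.
  rewrite !inE /= => h; suff : false by [].
  apply: h => // u v huv hu; rewrite !inE in hu *; apply: contraT => hv.
  move: huv; rewrite inE => /andP [nF hE].
  by move: (cut_edge hs hM (isT : i0 < i1) hE hu hv); rewrite (negbTE nF).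
apply/eqP; rewrite eqn_leq; apply/andP; split.
  rewrite -cF0 /edge_connectivity; apply: (@bigmin_le _ _ _ _ F0).
  by rewrite inE sF0 nc.
rewrite /edge_connectivity; apply: (big_ind (fun x => 2 * k <= x)).
- by rewrite -cF0; apply: subset_leq_card.
- by move=> x y hx hy; rewrite leq_min hx hy.
- move=> F /andP [hF ncF]; rewrite inE in hF.
  rewrite leqNgt; apply/negP => lt; move/negP: ncF; apply.
  exact: conn_rem.
Qed.

End C.

Theorem mainTheorem11 (k s : nat) (M : 'I_s -> {set {set HV s k}}) :
  1 <= k -> 2 ^ k.-1 * (2 ^ k + 1) < s ->
  (forall i : 'I_s, is_matching_between i (M i)) ->
  edge_connectivity (H_edges M) = 2 * k /\ m_code (H_edges M) = 2 ^ k.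
Proof.
move=> hk hsk hM.
have hs : 3 <= s.
  have h1 : 0 < 2 ^ k.-1 by rewrite expn_gt0.
  have h2 : 3 <= 2 ^ k + 1.
    by case: k hk {hsk hM M h1} => // k' _; rewrite expnS; have := expn_gt0 2 k'; lia.
  have := leq_mul h1 h2; lia.
split; first exact: edge_conn_main hs hM.
apply/eqP; rewrite eqn_leq (m_code_ge hs hM) andbT.
rewrite /m_code; apply/bigmax_leqP => C hC.
exact: (code_le hs hM hk hsk hC).
Qed.
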